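(* Let $K$ be a finite oriented simplicial complex, let $q,h,h'$ be non-negative integers, and fix the basis $\{\sigma_1^{(q)},\dots,\sigma_n^{(q)}\}$ of $C_q(K)$ given by the oriented $q$-simplices (and the analogous bases of $C_{q+h}(K)$ and $C_{q-h'}(K)$). Let $B_{q+h,h}$ and $B_{q,h'}$ be the matrices of $\partial_{q+h,h}\colon C_{q+h}(K)\to C_q(K)$ and $\partial_{q,h'}\colon C_q(K)\to C_{q-h'}(K)$ in these bases, and set $L^U_{q,h}=B_{q+h,h}B_{q+h,h}^t$, $L^L_{q,h'}=B_{q,h'}^tB_{q,h'}$ and $L_{q,h,h'}=L^U_{q,h}+L^L_{q,h'}$ (the matrix of the multi-combinatorial Laplacian $\Delta_{q,h,h'}=\partial_{q+h,h}\circ\partial^*_{q+h,h}+\partial^*_{q,h'}\circ\partial_{q,h'}$). Then $$\big(L^U_{q,h}\big)_{i,j}=\begin{cases}\deg_U^{h,q+h}(\sigma_i^{(q)}) & i=j,\\ \operatorname{odeg}_U^{q+h}(\sigma_i^{(q)},\sigma_j^{(q)}) & i\neq j,\end{cases}\qquad \big(L^L_{q,h'}\big)_{i,j}=\begin{cases}\binom{q+1}{q-h'+1} & i=j,\\ \operatorname{odeg}_L^{q-h'}(\sigma_i^{(q)},\sigma_j^{(q)}) & i\neq j,\end{cases}$$ and $$\big(L_{q,h,h'}\big)_{i,j}=\begin{cases}\deg_U^{h,q+h}(\sigma_i^{(q)})+\binom{q+1}{q-h'+1} & i=j,\\ \operatorname{odeg}_U^{q+h}(\sigma_i^{(q)},\sigma_j^{(q)})+\operatorname{odeg}_L^{q-h'}(\sigma_i^{(q)},\sigma_j^{(q)})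 & i\neq j.\end{cases}$$
   Context: $K$ is a finite abstract simplicial complex (finite family of nonempty finite vertex sets closed under nonempty subsets); a $q$-simplex has $q+1$ vertices; a face of a simplex is a simplex of $K$ contained in it (a simplex is a face of itself). Orientation: orderings of the vertices modulo even permutations; $[v_{\eta(0)},\dots,v_{\eta(q)}]=\operatorname{sign}(\eta)[v_0,\dots,v_q]$. Each simplex has a fixed orientation; $C_m(K)$ is the real vector space with basis the fixed-orientation $m$-simplices (opposite orientation = negative), $C_m(K)=0$ for $m\notin[0,\dim K]$, with the inner product making this basis orthonormal; $\partial^*$ denotes the adjoint with respect to these inner products (its matrix is the transpose). Multi-parameter boundary operator: for $m\ge k\ge0$, $\partial_{m,k}\colon C_m(K)\to C_{m-k}(K)$ is linear with $\partial_{m,k}([v_{\eta(0)},\dots,v_{\eta(m)}])=\sum_{J}\operatorname{sign}(\eta)\operatorname{sign}(\epsilon_J)[v_0,\dots,\widehat{v_{j_1}},\dots,\widehat{v_{j_k}},\dots,v_m]$, summing over subsets $J=\{j_1<\dots<j_k\}\subseteq\{0,\dots,m\}$ (hatted vertices removed, others in increasing index order), $\epsilon_J$ the permutation of $\{0,\dots,m\}$ with $r\mapsto j_{r+1}$ for $r<k$ and $k,\dots,m$ mapped increasingly onto the complement of $J$; if $m<k$ then $\partial_{m,k}=0$. For a $p$-simplex $\tau$ and a face $\sigma\subseteq\tau$ of dimension $m$, $\operatorname{sign}(\tau,\sigma)\in\{\pm1\}$ is the coefficient of $\sigma$ in $\partial_{p,p-m}(\tau)$ (so $\operatorname{sign}(\tau,\tau)=1$).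 Upper sign: $\operatorname{sig}_U(\sigma,\sigma';\tau^{(p)})=0$ if $\sigma\cup\sigma'\not\subseteq\tau^{(p)}$, else $\operatorname{sign}(\tau^{(p)},\sigma)\operatorname{sign}(\tau^{(p)},\sigma')$. Lower sign: $\operatorname{sig}_L(\sigma,\sigma';\tau^{(p)})=0$ if $\tau^{(p)}\not\subseteq\sigma\cap\sigma'$, else $\operatorname{sign}(\sigma,\tau^{(p)})\operatorname{sign}(\sigma',\tau^{(p)})$. Both are independent of the orientation of $\tau^{(p)}$. Oriented degrees: $\operatorname{odeg}^p_U(\sigma,\sigma')=\frac12\sum_{\tau^{(p)}}\operatorname{sig}_U(\sigma,\sigma';\tau^{(p)})$ and $\operatorname{odeg}^p_L(\sigma,\sigma')=\frac12\sum_{\tau^{(p)}}\operatorname{sig}_L(\sigma,\sigma';\tau^{(p)})$, sums over all oriented $p$-simplices of $K$ (each with both orientations). $\deg_U^{h,q+h}(\sigma^{(q)})$ is the number of $(q+h)$-simplices $\sigma^{(q+h)}$ of $K$ such that some $(q+h)$-simplex contains both $\sigma^{(q)}$ and $\sigma^{(q+h)}$, i.e. the number of $(q+h)$-simplices of $K$ having $\sigma^{(q)}$ as a face. *)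

(* Defs.v *)
From HB Require Import structures.
From mathcomp Require Import all_boot all_order all_algebra.
Set Implicit Arguments. Unset Strict Implicit. Unset Printing Implicit Defensive.
Import Order.TTheory GRing.Theory Num.Theory.
Local Open Scope ring_scope.

Section Defs.
Variable N : nat.
Notation V := 'I_N.

Definition is_complex (K : {set {set V}}) : Prop :=
  set0 \notin K /\
  forall s r : {set V}, s \in K -> r \subset s -> r != set0 -> r \in K.

(* A choice of orientation: for each simplex a fixed ordering of its vertices
   (the orientation is the class of that ordering modulo even permutations). *)
Definition is_orientation (K : {set {set V}}) (o : {set V} -> seq V) : Prop :=
  forall s, s \in K -> perm_eq (o s) (enum s).

Definition simp (K : {set {set V}}) (m : nat) : {set {set V}} :=
  [set s in K | #|s| == m.+1].

Definition basis (K : {set {set V}}) (m : nat) (i : 'I_#|simp K m|) : {set V} :=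
  enum_val i.

(* Number of inversions of a sequence of naturals; its parity is the sign of
   the permutation it represents. *)
Definition ninv (s : seq nat) : nat :=
  \sum_(i < size s) \sum_(j < size s | i < j) (nth 0 s j < nth 0 s i).

Variable R : realFieldType.

Definition sgnb (b : bool) : R := (-1) ^+ b.

(* sign of the ordering s relative to the ordering t of the same vertex set:
   [s] = relsign s t * [t] *)
Definition relsign (s t : seq V) : R := sgnb (odd (ninv [seq index x t | x <- s])).

Definition epsJ n (J : {set 'I_n}) : R :=
  sgnb (odd (ninv ([seq val j | j <- enum J] ++ [seq val j | j <- enum (~: J)]))).

Definition face (s : seq V) (J : {set 'I_(size s)}) : seq V :=
  mask [seq i \notin J | i : 'I_(size s)] s.

Variable o : {set V} -> seq V.

(* Coefficient of the basis simplex r (with its fixed orientation) in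
   partial_{m,k}([s]), where [s] = [v_{eta(0)},...,v_{eta(m)}] is an oriented
   simplex, v_0..v_m its fixed orientation:
   partial_{m,k}[s] = sum_J sign(eta) sign(eps_J) [v_0,..,^v_{j1},..,^v_{jk},..,v_m]. *)
Definition bd_coef (k : nat) (s : seq V) (r : {set V}) : R :=
  let S := [set x in s] in
  relsign s (o S) *
  \sum_(J : {set 'I_(size (o S))} | #|J| == k)
     epsJ J * (if [set x in face J] == r then relsign (face J) (o r) else 0).

(* Coefficient of the oriented simplex [t] in partial_{p,p-m}([s]). *)
Definition sgnf (s t : seq V) : R :=
  relsign t (o [set x in t]) * bd_coef (size s - size t) s [set x in t].

Definition sign_face (tau sigma : {set V}) : R := sgnf (o tau) (o sigma).

(* Matrix of partial_{c,k} : C_c(K) -> C_r(K) in the simplex bases (r = c - k). *)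
Definition Bmat (K : {set {set V}}) (r c k : nat) : 'M[R]_(#|simp K r|, #|simp K c|) :=
  \matrix_(i, j) bd_coef k (o (basis j)) (basis i).

(* the two orientations of an ordering *)
Definition swap12 (s : seq V) : seq V :=
  if s is a :: b :: t then b :: a :: t else s.
Definition both_or (s : seq V) : seq (seq V) := [:: s; swap12 s].

Definition sigU (sg sg' : {set V}) (s : seq V) : R :=
  if (sg :|: sg') \subset [set x in s] then sgnf s (o sg) * sgnf s (o sg') else 0.
Definition sigL (sg sg' : {set V}) (s : seq V) : R :=
  if [set x in s] \subset (sg :&: sg') then sgnf (o sg) s * sgnf (o sg') s else 0.

Definition odegU (K : {set {set V}}) (p : nat) (sg sg' : {set V}) : R :=
  2^-1 * \sum_(t in simp K p) \sum_(s <- both_or (o t)) sigU sg sg' s.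
Definition odegL (K : {set {set V}}) (p : nat) (sg sg' : {set V}) : R :=
  2^-1 * \sum_(t in simp K p) \sum_(s <- both_or (o t)) sigL sg sg' s.

End Defs.

Definition degU N (K : {set {set 'I_N}}) (h q : nat) (sg : {set 'I_N}) : nat :=
  #|[set t in simp K (q + h) | [exists t' in simp K (q + h), (sg :|: t) \subset t']]|.

(* Main.v *)
Require Import Defs.
From HB Require Import structures.
From mathcomp Require Import all_boot all_order all_algebra.
Set Implicit Arguments. Unset Strict Implicit. Unset Printing Implicit Defensive.
Import Order.TTheory GRing.Theory Num.Theory.
Local Open Scope ring_scope.

Section H.
Variables (N : nat) (R : realFieldType) (o : {set 'I_N} -> seq 'I_N).
Notation V := 'I_N.

Lemma sgnb_sq b : sgnb R b * sgnb R b = 1.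
Proof. by case: b; rewrite /sgnb /= ?expr1 ?expr0 ?mulr1 ?mulrNN ?mulr1. Qed.

Lemma map_index_iota (u : seq V) : uniq u -> [seq index x u | x <- u] = iota 0 (size u).
Proof.
elim: u => [|y u IH] //= /andP[yNu uu].
rewrite eqxx /=; have -> : iota 1 (size u) = map (addn 1) (iota 0 (size u)) by rewrite -iotaDl.
rewrite -IH // -map_comp; congr (_ :: _).
apply/eq_in_map => x xu /=; case: eqP => // exy; by rewrite exy xu in yNu.
Qed.

Lemma ninv_iota n : ninv (iota 0 n) = 0%N.
Proof.
rewrite /ninv big1 // => i _; rewrite big1 // => j ij.
rewrite size_iota in i j ij *.
by rewrite !nth_iota // !add0n ltnNge ltnW.
Qed.

Lemma relsign_refl (u : seq V) : uniq u -> relsign R u u = 1.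
Proof. by move=> uu; rewrite /relsign map_index_iota // ninv_iota. Qed.

Definition core (k : nat) (X r : {set V}) : R :=
  \sum_(J : {set 'I_(size (o X))} | #|J| == k)
     epsJ R J * (if [set x in face J] == r then relsign R (face J) (o r) else 0).

Lemma bd_coreE k s r : bd_coef R o k s r = relsign R s (o [set x in s]) * core k [set x in s] r.
Proof. by []. Qed.

Lemma face_mem (u : seq V) (J : {set 'I_(size u)}) x : uniq u ->
  (x \in face J) = (x \in u) && [forall i : 'I_(size u), (tnth (in_tuple u) i == x) ==> (i \notin J)].
Proof.
move=> uu; rewrite /face in_mask //.
case xu: (x \in u) => //=.
have ix : (index x u < size u)%N by rewrite index_mem.
rewrite (nth_map (Ordinal ix)); last by rewrite size_enum_ord.
have -> : nth (Ordinal ix) (enum 'I_(size u)) (index x u) = Ordinal ix.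
  by apply/val_inj; rewrite /= nth_enum_ord.
apply/idP/forallP => [H i|H]; last by have := H (Ordinal ix); rewrite (tnth_nth x) /= nth_index // eqxx.
apply/implyP => /eqP ti.
suff -> : i = Ordinal ix by [].
apply/val_inj => /=; rewrite -ti (tnth_nth x) /= index_uniq //.
Qed.


Lemma core_sq k X r : uniq (o X) -> [set x in o X] = X ->
  core k X r ^+ 2 = ((r \subset X) && (#|r| + k == #|X|)%N)%:R.
Proof.
move=> uu setu.
have tinj : injective (tnth (in_tuple (o X))) by apply/tuple_uniqP.
have cardX : #|X| = size (o X).
  rewrite -{1}setu cardsE; exact: (card_uniqP uu).
case: (boolP (r \subset X)) => rX /=; last first.
  rewrite /core big1 ?expr0n // => J _.
  case: eqP => [fr|]; last by rewrite mulr0.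
  case/negP: rX; rewrite -fr; apply/subsetP => x; rewrite inE => /mem_mask.
  move=> xo; have : x \in [set x in o X] by rewrite inE.
  by rewrite setu.
pose J0 := [set i : 'I_(size (o X)) | tnth (in_tuple (o X)) i \notin r].
have fJ : forall J, ([set x in face J] == r) = (J == J0).
  move=> J; apply/eqP/eqP.
    move=> fr; apply/setP => i; rewrite !inE -fr inE face_mem // mem_tnth /=.
    rewrite negb_forall; apply/idP/existsP => [iJ|[i']].
      by exists i; rewrite eqxx iJ.
    by rewrite negb_imply negbK => /andP[/eqP/tinj ->].
  move=> ->; apply/setP => x; rewrite inE face_mem //.
  case xu: (x \in o X); last first.
    apply/esym/negbTE/negP => /(subsetP rX); by rewrite -setu inE xu.
  rewrite /=; apply/forallP/idP => [H|xr i].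
    have ix : (index x (o X) < size (o X))%N by rewrite index_mem.
    have := H (Ordinal ix); rewrite (tnth_nth x) /= nth_index // eqxx /= inE negbK.
    by rewrite (tnth_nth x) /= nth_index.
  by apply/implyP => /eqP ti; rewrite inE ti negbK.
have cJ0 : (#|J0| + #|r| = #|X|)%N.
  have -> : r = (tnth (in_tuple (o X))) @: ~: J0.
    apply/setP => x; apply/idP/imsetP => [xr|[i]]; last by rewrite !inE negbK => ? ->.
    have : x \in [set x in o X] by rewrite setu (subsetP rX).
    rewrite inE.
    rewrite -index_mem => ix; exists (Ordinal ix); first by rewrite !inE negbK (tnth_nth x) /= nth_index // -index_mem.
    by rewrite (tnth_nth x) /= nth_index // -index_mem.
  by rewrite card_imset // cardsC card_ord cardX.
rewrite /core (eq_bigr (fun J : {set 'I_(size (o X))} => epsJ R J * (if J == J0 then relsign R (face J0) (o r) else 0))); last first.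
  by move=> J _; rewrite fJ; case: eqP => // ->.
rewrite big_mkcond /= (bigD1 J0) //= big1 ?addr0 => [|J /negPf ->]; last by rewrite mulr0 if_same.
rewrite eqxx -cJ0 [(#|J0| + _)%N]addnC eqn_add2l eq_sym.
case: ifP => _; last by rewrite expr0n.
by rewrite expr2 mulrACA /epsJ /relsign !sgnb_sq mulr1.
Qed.

Lemma core0 k X (r : {set V}) : uniq (o X) -> [set x in o X] = X -> ~~ (r \subset X) -> core k X r = 0.
Proof.
move=> uu sX rX; apply/eqP; rewrite -sqrf_eq0 core_sq // (negbTE rX) //.
Qed.

Lemma orientedP K t : is_orientation K o -> t \in K ->
  [/\ uniq (o t), [set x in o t] = t & size (o t) = #|t|].
Proof.
move=> oK tK; have pe := oK t tK; split.
- by rewrite (perm_uniq pe) enum_uniq.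
- by apply/setP => x; rewrite inE (perm_mem pe) mem_enum.
- by rewrite (perm_size pe) -cardE.
Qed.

Lemma swap12_set (s : seq V) : [set x in swap12 s] = [set x in s].
Proof. by case: s => [|a [|b s]] //; apply/setP => x; rewrite !inE orbCA. Qed.

Lemma swap12_size (s : seq V) : size (swap12 s) = size s.
Proof. by case: s => [|a [|b s]]. Qed.

Lemma bd_prod k s X r r' : [set x in s] = X ->
  bd_coef R o k s r * bd_coef R o k s r' = core k X r * core k X r'.
Proof.
by move=> sX; rewrite !bd_coreE sX mulrACA /relsign sgnb_sq mul1r.
Qed.

Lemma bd_or k X r : uniq (o X) -> [set x in o X] = X -> bd_coef R o k (o X) r = core k X r.
Proof. by move=> uu sX; rewrite bd_coreE sX relsign_refl ?mul1r. Qed.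

End H.

Theorem mainTheorem4 (R : realFieldType) (N : nat) (K : {set {set 'I_N}})
  (o : {set 'I_N} -> seq 'I_N) (q h h' : nat) :
  is_complex K -> is_orientation K o -> (h' <= q)%N ->
  let BU := Bmat R o K q (q + h) h in
  let BL := Bmat R o K (q - h') q h' in
  let LU := BU *m BU^T in
  let LL := BL^T *m BL in
  let L := LU + LL in
  forall i j : 'I_#|simp K q|,
    let si := basis i in let sj := basis j in
    LU i j = (if i == j then (degU K h q si)%:R else odegU R o K (q + h) si sj) /\
    LL i j = (if i == j then 'C(q.+1, (q - h').+1)%:R else odegL R o K (q - h') si sj) /\
    L i j = (if i == j then (degU K h q si)%:R + 'C(q.+1, (q - h').+1)%:R
             else odegU R o K (q + h) si sj + odegL R o K (q - h') si sj).
Proof.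
move=> [K0 Kcl] oK hq BU BL LU LL L i j si sj.
have simpP m t : t \in simp K m -> t \in K /\ #|t| = m.+1.
  by rewrite inE => /andP[-> /eqP].
have [siK csi] : si \in K /\ #|si| = q.+1 by apply: simpP; exact: enum_valP.
have [sjK csj] : sj \in K /\ #|sj| = q.+1 by apply: simpP; exact: enum_valP.
have [usi ssi zsi] := orientedP oK siK.
have [usj ssj zsj] := orientedP oK sjK.
have LUE : LU i j = \sum_(t in simp K (q + h)) core R o h t si * core R o h t sj.
  rewrite [RHS]big_enum_val /= !mxE; apply: eq_bigr => c _.
  rewrite !mxE; have [tK _] := simpP _ _ (enum_valP c).
  by have [_ st _] := orientedP oK tK; rewrite (bd_prod _ _ _ _ _ st).
have LLE : LL i j = \sum_(r in simp K (q - h')) core R o h' si r * core R o h' sj r.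
  rewrite [RHS]big_enum_val /= !mxE; apply: eq_bigr => c _.
  by rewrite !mxE (bd_or _ _ _ usi ssi) (bd_or _ _ _ usj ssj).
have hU : LU i j = (if i == j then (degU K h q si)%:R else odegU R o K (q + h) si sj).
  rewrite LUE; case: eqP => [eij|nij].
    have -> : sj = si by rewrite /sj /si eij.
    rewrite (eq_bigr (fun t : {set 'I_N} => if si \subset t then 1 else 0 : R)); last first.
      move=> t tS; have [tK ct] := simpP _ _ tS; have [ut st zt] := orientedP oK tK.
      by rewrite -expr2 core_sq // csi ct addSn eqxx andbT; case: ifP.
    rewrite -big_mkcondr /=.
    transitivity (#|[set t in simp K (q + h) | si \subset t]|%:R : R).
      by rewrite -sumr_const; apply: eq_bigl => t; rewrite !inE.
    rewrite /degU; congr (_%:R); apply: eq_card => t; rewrite !inE.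
    apply/andP/andP => [[/andP[tK ct] st]|[/andP[tK ct] /existsP[t' /andP[t'S sub]]]].
      split; first by rewrite tK.
      by apply/existsP; exists t; rewrite inE tK ct /= subUset st subxx.
    split; first by rewrite tK.
    rewrite subUset in sub; case/andP: sub => s1 s2.
    have [_ ct'] := simpP _ _ t'S.
    have /eqP e : t == t' by rewrite eqEcard s2 ct' (eqP ct) /=.
    by rewrite e.
  have inner : forall t, t \in simp K (q + h) ->
     \sum_(s <- both_or (o t)) sigU R o si sj s = (core R o h t si * core R o h t sj) *+ 2.
    move=> t tS; have [tK ct] := simpP _ _ tS; have [ut st zt] := orientedP oK tK.
    have gen : forall s, [set x in s] = t -> size s = #|t| ->
        sigU R o si sj s = core R o h t si * core R o h t sj.
      move=> s sS zS; rewrite /sigU /sgnf ssi ssj relsign_refl // relsign_refl // !mul1r.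
      rewrite zS zsi zsj ct csi csj subSS addKn sS; case: ifP => [_|].
        by rewrite (bd_prod _ _ _ _ _ sS).
      rewrite subUset => /negbT; rewrite negb_and => /orP[] nt.
        by rewrite (core0 _ _ ut st nt) mul0r.
      by rewrite (core0 _ _ ut st nt) mulr0.
    rewrite /both_or !big_cons big_nil addr0 gen // ?gen ?swap12_set ?swap12_size //.
  rewrite /odegU (eq_bigr _ inner) sumrMnl mulrnAr -mulrnAl -mulr_natr mulVf ?mul1r //.
  by rewrite pnatr_eq0.
have hL : LL i j = (if i == j then 'C(q.+1, (q - h').+1)%:R else odegL R o K (q - h') si sj).
  rewrite LLE; case: eqP => [eij|nij].
    have -> : sj = si by rewrite /sj /si eij.
    rewrite (eq_bigr (fun r : {set 'I_N} => if r \subset si then 1 else 0 : R)); last first.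
      move=> r rS; have [rK cr] := simpP _ _ rS.
      by rewrite -expr2 core_sq // csi cr addSn subnK // eqxx andbT; case: ifP.
    rewrite -big_mkcondr /=.
    transitivity (#|[set r in simp K (q - h') | r \subset si]|%:R : R).
      by rewrite -sumr_const; apply: eq_bigl => r; rewrite !inE.
    rewrite -csi -cards_draws; congr (_%:R); apply: eq_card => r; rewrite !inE.
    apply/andP/andP => [[/andP[_ ->] ->] //|[rs cr]]; split => //; rewrite cr andbT.
    apply: Kcl siK rs _; apply/eqP => r0; by rewrite r0 cards0 in cr.
  have inner : forall r, r \in simp K (q - h') ->
     \sum_(s <- both_or (o r)) sigL R o si sj s = (core R o h' si r * core R o h' sj r) *+ 2.
    move=> r rS; have [rK cr] := simpP _ _ rS; have [ur sr zr] := orientedP oK rK.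
    have gen : forall s, [set x in s] = r -> size s = #|r| ->
        sigL R o si sj s = core R o h' si r * core R o h' sj r.
      move=> s sS zS; rewrite /sigL /sgnf sS zS zsi zsj csi csj cr subSS subKn //.
      rewrite (bd_or _ _ _ usi ssi) (bd_or _ _ _ usj ssj); case: ifP => [_|].
        by rewrite mulrACA /relsign sgnb_sq mul1r.
      rewrite subsetI => /negbT; rewrite negb_and => /orP[] nt.
        by rewrite (core0 _ _ usi ssi nt) !(mulr0, mul0r).
      by rewrite (core0 _ _ usj ssj nt) !(mulr0, mul0r).
    rewrite /both_or !big_cons big_nil addr0 gen // ?gen ?swap12_set ?swap12_size //.
  rewrite /odegL (eq_bigr _ inner) sumrMnl mulrnAr -mulrnAl -mulr_natr mulVf ?mul1r //.
  by rewrite pnatr_eq0.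
split => //; split => //.
by rewrite /L mxE hU hL; case: (i == j).
Qed.
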